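(* Let $0\le\alpha\le\beta\le\pi/2$ and $P_1,P_2>0$, and define $\mathcal R(\theta)$ as in the context. Then for every $\theta\in\mathbb R$ there exists $\theta'\in[\alpha,\beta]$ with $\mathcal R(\theta)\subseteq\mathcal R(\theta')$. In particular, for a two-hop MAC with two relay nodes, to obtain the first outer bound it suffices to take $\theta\in[\alpha,\beta]$.
   Context: Let $\mathcal C(x)=\frac12\log_2(1+x)$, $\phi_1(\theta)=P_1\cos^2(\theta-\alpha)$, $\phi_2(\theta)=P_2\cos^2(\theta-\beta)$, $\phi=\phi_1+\phi_2$, and $\mathcal R(\theta)=\{(R_1,R_2)\ge0:R_1\le\mathcal C(\phi_1(\theta)),R_2\le\mathcal C(\phi_2(\theta)),R_1+R_2\le\mathcal C(\phi(\theta))\}$. In a two-user two-hop MAC with two relays (source-to-relay channel vectors $\mathbf h_{01},\mathbf h_{02}\in\mathbb R^2$ with positive entries, source powers $P_{S_i}$, relay gains $\mathbf B$, relay-to-destination vector $\mathbf h_1$), writing $\mathbf h_{0i}/\|\mathbf h_{0i}\|$ and $\mathbf B\mathbf h_1/\|\mathbf B\mathbf h_1\|$ as $(\cos\alpha,\sin\alpha)$, $(\cos\beta,\sin\beta)$, $(\cos\theta,\sin\theta)$ and $P_i=\|\mathbf h_{0i}\|^2P_{S_i}$, the first outer-bound rate set (destination noise omitted) of the AF scheme $\mathbf B$ equals $\mathcal R(\theta)$. *)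

(* Defs.v *)
From Stdlib Require Import Reals.
Open Scope R_scope.

Definition Cap (x : R) : R := / 2 * (ln (1 + x) / ln 2).

Definition phi1 (P1 alpha theta : R) : R := P1 * (cos (theta - alpha)) ^ 2.
Definition phi2 (P2 beta theta : R) : R := P2 * (cos (theta - beta)) ^ 2.

Definition region (P1 P2 alpha beta theta : R) (R1 R2 : R) : Prop :=
  0 <= R1 /\ 0 <= R2 /\
  R1 <= Cap (phi1 P1 alpha theta) /\
  R2 <= Cap (phi2 P2 beta theta) /\
  R1 + R2 <= Cap (phi1 P1 alpha theta + phi2 P2 beta theta).

(* Main.v *)
Require Import Defs.
From Stdlib Require Import Reals Lra ZArith Rtrigo_facts.
Open Scope R_scope.

Lemma cos_dec_w x y : 0 <= x -> x <= y -> y <= PI -> cos y <= cos x.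
Proof.
  intros; destruct (Req_dec x y) as [->|]; [lra|].
  left; apply cos_decreasing_1; lra.
Qed.

Lemma cos2_le1 x : cos x ^ 2 <= 1.
Proof. pose proof (sin2_cos2 x). unfold Rsqr in H. pose proof (pow2_ge_0 (sin x)). nra. Qed.

Lemma cos2_shift (k : Z) : forall x, cos (x + IZR k * PI) ^ 2 = cos x ^ 2.
Proof.
  induction k using Z.peano_ind; intros x.
  - f_equal. f_equal. simpl; ring.
  - rewrite succ_IZR. replace (x + (IZR k + 1) * PI) with ((x + IZR k * PI) + PI) by ring.
    rewrite neg_cos. rewrite <- IHk. ring.
  - rewrite <- (IHk x). unfold Z.pred; rewrite plus_IZR; change (IZR (-1)) with (-1).
    replace (x + IZR k * PI) with ((x + (IZR k + -1) * PI) + PI) by ring.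
    rewrite neg_cos. ring.
Qed.

Lemma Cap_mono a b : 0 <= a -> a <= b -> Cap a <= Cap b.
Proof.
  intros. unfold Cap.
  assert (H2 : 0 < ln 2) by (pose proof ln_lt_2; lra).
  assert (ln (1 + a) <= ln (1 + b)).
  { destruct (Req_dec a b) as [->|]; [lra|]. left; apply ln_increasing; lra. }
  unfold Rdiv. apply Rmult_le_compat_l; [lra|].
  apply Rmult_le_compat_r; [left; apply Rinv_0_lt_compat; lra| lra].
Qed.

Lemma key alpha beta : 0 <= alpha -> alpha <= beta -> beta - alpha <= PI / 2 ->
  forall d, alpha <= d < alpha + PI -> exists t, alpha <= t <= beta /\
    cos (d - alpha) ^ 2 <= cos (t - alpha) ^ 2 /\ cos (d - beta) ^ 2 <= cos (t - beta) ^ 2.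
Proof.
  intros Ha Hab Hg d [Hd1 Hd2].
  pose proof PI_RGT_0 as Hpi.
  destruct (Rle_dec d beta).
  { exists d. lra. }
  destruct (Rlt_dec d (alpha + PI/2)).
  { exists beta. split; [lra|]. split.
    - pose proof (cos_dec_w (beta - alpha) (d - alpha) ltac:(lra) ltac:(lra) ltac:(lra)).
      pose proof (cos_ge_0 (d - alpha) ltac:(lra) ltac:(lra)). nra.
    - replace (beta - beta) with 0 by ring. rewrite cos_0. pose proof (cos2_le1 (d - beta)). lra. }
  destruct (Rle_dec d (beta + PI/2)).
  { exists (alpha + beta + PI/2 - d). split; [lra|]. split.
    - replace (alpha + beta + PI/2 - d - alpha) with (beta + PI/2 - d) by ring.
      pose proof (cos_dec_w (beta + PI/2 - d) (PI - (d - alpha)) ltac:(lra) ltac:(lra) ltac:(lra)).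
      rewrite Rtrigo_facts.cos_pi_minus in H.
      pose proof (cos_ge_0 (PI - (d - alpha)) ltac:(lra) ltac:(lra)). rewrite Rtrigo_facts.cos_pi_minus in H0. nra.
    - replace (alpha + beta + PI/2 - d - beta) with (- (d - alpha - PI/2)) by ring.
      rewrite cos_neg.
      pose proof (cos_dec_w (d - alpha - PI/2) (d - beta) ltac:(lra) ltac:(lra) ltac:(lra)).
      pose proof (cos_ge_0 (d - beta) ltac:(lra) ltac:(lra)). nra. }
  exists alpha. split; [lra|]. split.
  - replace (alpha - alpha) with 0 by ring. rewrite cos_0. pose proof (cos2_le1 (d - alpha)). lra.
  - replace (alpha - beta) with (- (beta - alpha)) by ring. rewrite cos_neg.
    pose proof (cos_dec_w (beta - alpha) (PI - (d - beta)) ltac:(lra) ltac:(lra) ltac:(lra)).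
    rewrite Rtrigo_facts.cos_pi_minus in H.
    pose proof (cos_ge_0 (PI - (d - beta)) ltac:(lra) ltac:(lra)). rewrite Rtrigo_facts.cos_pi_minus in H0. nra.
Qed.

Theorem lemma3 (alpha beta P1 P2 : R)
  (Ha : 0 <= alpha) (Hab : alpha <= beta) (Hb : beta <= PI / 2)
  (HP1 : 0 < P1) (HP2 : 0 < P2) :
  forall theta : R, exists theta' : R,
    alpha <= theta' <= beta /\
    forall R1 R2 : R,
      region P1 P2 alpha beta theta R1 R2 ->
      region P1 P2 alpha beta theta' R1 R2.
Proof.
  intros theta.
  pose proof PI_RGT_0 as Hpi.
  set (z := (up ((theta - alpha) / PI) - 1)%Z).
  destruct (archimed ((theta - alpha) / PI)) as [A1 A2].
  assert (Hz1 : IZR z <= (theta - alpha) / PI).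
  { unfold z. rewrite minus_IZR. lra. }
  assert (Hz2 : (theta - alpha) / PI < IZR z + 1).
  { unfold z. rewrite minus_IZR. lra. }
  set (d := theta - IZR z * PI).
  assert (Hd : alpha <= d < alpha + PI).
  { unfold d. split.
    - apply (Rmult_le_compat_r PI) in Hz1; [|lra].
      unfold Rdiv in Hz1. rewrite Rmult_assoc, Rinv_l in Hz1; lra.
    - apply (Rmult_lt_compat_r PI) in Hz2; [|lra].
      unfold Rdiv in Hz2. rewrite Rmult_assoc, Rinv_l in Hz2; lra. }
  destruct (key alpha beta Ha Hab ltac:(lra) d Hd) as [t [Ht [H1 H2]]].
  assert (E : forall c, cos (d - c) ^ 2 = cos (theta - c) ^ 2).
  { intros c. rewrite <- (cos2_shift z (d - c)). unfold d. f_equal. f_equal. ring. }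
  rewrite E in H1, H2.
  exists t. split; [exact Ht|].
  intros R1 R2 [r1 [r2 [c1 [c2 c3]]]].
  unfold phi1, phi2 in *.
  pose proof (pow2_ge_0 (cos (theta - alpha))).
  pose proof (pow2_ge_0 (cos (theta - beta))).
  assert (F1 : P1 * cos (theta - alpha) ^ 2 <= P1 * cos (t - alpha) ^ 2) by (apply Rmult_le_compat_l; lra).
  assert (F2 : P2 * cos (theta - beta) ^ 2 <= P2 * cos (t - beta) ^ 2) by (apply Rmult_le_compat_l; lra).
  assert (G1 : 0 <= P1 * cos (theta - alpha) ^ 2) by nra.
  assert (G2 : 0 <= P2 * cos (theta - beta) ^ 2) by nra.
  unfold region, phi1, phi2; repeat split; try lra.
  - eapply Rle_trans; [exact c1|]. apply Cap_mono; lra.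
  - eapply Rle_trans; [exact c2|]. apply Cap_mono; lra.
  - eapply Rle_trans; [exact c3|]. apply Cap_mono; lra.
Qed.
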